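(* For all $\lambda\mu\mathrm{T}$-terms $t_1,t_2$: if $t_1=t_2$ in $\lambda\mu\mathrm{T}$, then $t_1^*=t_2^*$ in Gödel's T.
   Context: The calculus $\lambda\mu\mathrm{T}$. Types: $\rho ::= \mathbb{N} \mid \sigma\to\tau$. Over infinite sets of $\lambda$-variables $x,y,\dots$ and $\mu$-variables $\alpha,\beta,\gamma,\dots$, terms and commands are mutually defined by $t,r,s ::= x \mid \lambda x{:}\rho.r \mid t\,s \mid \mu\alpha{:}\rho.c \mid 0 \mid \mathsf{S}\,t \mid \mathsf{nrec}_\rho\ r\ s\ t$ and $c ::= [\alpha]t$ (type annotations often omitted). $FCV(t)$ denotes the free $\mu$-variables; $t[x:=r]$ is capture-avoiding substitution. Numerals: $\underline{n} := \mathsf{S}^n 0$. Contexts: $E ::= \Box \mid E\,t \mid \mathsf{S}\,E \mid \mathsf{nrec}\ r\ s\ E$; $E[u]$ fills the hole with $u$. Structural substitution $t[\alpha:=\beta E]$ is defined homomorphically on all constructs (capture-avoiding) except $([\alpha]u)[\alpha:=\beta E] := [\beta]E[u[\alpha:=\beta E]]$ (and $([\gamma]u)[\alpha:=\beta E]:=[\gamma](u[\alpha:=\beta E])$ for $\gamma\neq\alpha$). Reduction $\to$ of $\lambda\mu\mathrm{T}$ is the compatible closure (on terms and commands) of: ($\beta$) $(\lambda x.t)r\to t[x:=r]$; ($\mu\mathsf{S}$) $\mathsf{S}(\mu\alpha.c)\to\mu\alpha.c[\alpha:=\alpha(\mathsf{S}\,\Box)]$; ($\mu R$) $(\mu\alpha.c)s\to\mu\alpha.c[\alpha:=\alpha(\Box\,s)]$;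 ($\mu\eta$) $\mu\alpha.[\alpha]t\to t$ if $\alpha\notin FCV(t)$; ($\mu i$) $[\alpha]\mu\beta.c\to c[\beta:=\alpha\,\Box]$; ($0$) $\mathsf{nrec}\ r\ s\ 0\to r$; ($\mathsf{S}$) $\mathsf{nrec}\ r\ s\ (\mathsf{S}\,\underline{n})\to s\ \underline{n}\ (\mathsf{nrec}\ r\ s\ \underline{n})$; ($\mu\mathbb{N}$) $\mathsf{nrec}\ r\ s\ (\mu\alpha.c)\to\mu\alpha.c[\alpha:=\alpha(\mathsf{nrec}\ r\ s\ \Box)]$; $=$ is its reflexive–symmetric–transitive closure. Gödel's T ($\lambda\mathrm{T}$) has terms $t ::= x\mid\lambda x{:}\rho.r\mid ts\mid 0\mid\mathsf{S}\,t\mid\mathsf{nrec}_\rho\ r\ s\ t$, reduction the compatible closure of $(\lambda x.t)r\to t[x:=r]$, $\mathsf{nrec}\ r\ s\ 0\to r$, $\mathsf{nrec}\ r\ s\ (\mathsf{S}\,t)\to s\ t\ (\mathsf{nrec}\ r\ s\ t)$, and conversion $=$ its reflexive–symmetric–transitive closure. CPS-translation: for $\lambda\mathrm{T}$-terms, $t\circ r:=\lambda k.t(\lambda l.l\,r\,k)$ and $\overline{t}:=\lambda k.k\,t$ (fresh $k,l$). To each $\mu$-variable $\alpha$ associate a fresh $\lambda$-variable $k_\alpha$. The translation is: $x^*:=\lambda k.xk$; $(\lambda x.t)^*:=\lambda k.k(\lambda x.t^* )$; $(tr)^*:=t^*\circ r^*$; $0^*:=\overline{0}$; $(\mathsf{S}\,t)^*:=\lambda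 k.t^*(\lambda l.k(\mathsf{S}\,l))$; $(\mathsf{nrec}_\rho\ r\ s\ t)^*:=\lambda k.t^*(\lambda l.\mathsf{nrec}\ r^*\ s'\ l\ k)$ where $s':=\lambda x p.(s^*\circ\overline{x})\circ p$; $(\mu\alpha.c)^*:=\lambda k_\alpha.c^*$; $([\alpha]t)^*:=t^*k_\alpha$. *)

(* Defs.v *)
(* Syntax of lambda-mu-T and Goedel's T with
   de Bruijn indices (two separate index spaces for lambda- and mu-variables
   in lambda-mu-T), so terms are identified up to alpha-equivalence. *)
From Stdlib Require Import Relations Arith.

Definition scons {A : Type} (x : A) (f : nat -> A) (n : nat) : A :=
  match n with 0 => x | S m => f m end.

(* var x : lambda-variable; lam t binds lambda-variable 0 in t;
   mu c binds mu-variable 0 in c; named a t is the command [a]t. *)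
Inductive tm : Type :=
  | var (x : nat)
  | lam (t : tm)
  | app (t s : tm)
  | mu (c : cmd)
  | zero
  | succ (t : tm)
  | nrec (r s t : tm)
with cmd : Type :=
  | named (a : nat) (t : tm).

Definition upr (f : nat -> nat) : nat -> nat := scons 0 (fun n => S (f n)).

Fixpoint ren (f g : nat -> nat) (t : tm) : tm :=
  match t with
  | var x => var (f x)
  | lam t => lam (ren (upr f) g t)
  | app t s => app (ren f g t) (ren f g s)
  | mu c => mu (renc f (upr g) c)
  | zero => zero
  | succ t => succ (ren f g t)
  | nrec r s t => nrec (ren f g r) (ren f g s) (ren f g t)
  end
with renc (f g : nat -> nat) (c : cmd) : cmd :=
  match c with named a t => named (g a) (ren f g t) end.

Definition ups (sigma : nat -> tm) : nat -> tm :=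
  scons (var 0) (fun n => ren S (fun k => k) (sigma n)).
Definition upm (sigma : nat -> tm) : nat -> tm :=
  fun n => ren (fun k => k) S (sigma n).

Fixpoint subst (sigma : nat -> tm) (t : tm) : tm :=
  match t with
  | var x => sigma x
  | lam t => lam (subst (ups sigma) t)
  | app t s => app (subst sigma t) (subst sigma s)
  | mu c => mu (substc (upm sigma) c)
  | zero => zero
  | succ t => succ (subst sigma t)
  | nrec r s t => nrec (subst sigma r) (subst sigma s) (subst sigma t)
  end
with substc (sigma : nat -> tm) (c : cmd) : cmd :=
  match c with named a t => named a (subst sigma t) end.

Definition subst1 (t r : tm) : tm := subst (scons r var) t.

Inductive ectx : Type :=
  | hole
  | capp (E : ectx) (t : tm)
  | csucc (E : ectx)
  | cnrec (r s : tm) (E : ectx).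

Fixpoint fill (E : ectx) (u : tm) : tm :=
  match E with
  | hole => u
  | capp E t => app (fill E u) t
  | csucc E => succ (fill E u)
  | cnrec r s E => nrec r s (fill E u)
  end.

Fixpoint renE (f g : nat -> nat) (E : ectx) : ectx :=
  match E with
  | hole => hole
  | capp E t => capp (renE f g E) (ren f g t)
  | csucc E => csucc (renE f g E)
  | cnrec r s E => cnrec (ren f g r) (ren f g s) (renE f g E)
  end.

Fixpoint ssub (a b : nat) (E : ectx) (t : tm) : tm :=
  match t with
  | var x => var x
  | lam t => lam (ssub a b (renE S (fun k => k) E) t)
  | app t s => app (ssub a b E t) (ssub a b E s)
  | mu c => mu (ssubc (S a) (S b) (renE (fun k => k) S E) c)
  | zero => zero
  | succ t => succ (ssub a b E t)
  | nrec r s t => nrec (ssub a b E r) (ssub a b E s) (ssub a b E t)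
  end
with ssubc (a b : nat) (E : ectx) (c : cmd) : cmd :=
  match c with
  | named g u =>
      if Nat.eqb g a then named b (fill E (ssub a b E u))
      else named g (ssub a b E u)
  end.

Fixpoint mocc (n : nat) (t : tm) : bool :=
  match t with
  | var _ => false
  | lam t => mocc n t
  | app t s => mocc n t || mocc n s
  | mu c => mocc_c (S n) c
  | zero => false
  | succ t => mocc n t
  | nrec r s t => mocc n r || mocc n s || mocc n t
  end
with mocc_c (n : nat) (c : cmd) : bool :=
  match c with named g u => Nat.eqb g n || mocc n u end.

Fixpoint num (n : nat) : tm :=
  match n with 0 => zero | S m => succ (num m) end.

Definition idn : nat -> nat := fun k => k.

Inductive step : tm -> tm -> Prop :=
  | st_beta t r : step (app (lam t) r) (subst1 t r)
  | st_muS c : step (succ (mu c)) (mu (ssubc 0 0 (csucc hole) c))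
  | st_muR c s : step (app (mu c) s) (mu (ssubc 0 0 (capp hole (ren idn S s)) c))
  | st_mueta t : mocc 0 t = false -> step (mu (named 0 t)) (ren idn Nat.pred t)
  | st_zero r s : step (nrec r s zero) r
  | st_S r s n : step (nrec r s (succ (num n)))
                      (app (app s (num n)) (nrec r s (num n)))
  | st_muN r s c : step (nrec r s (mu c))
                      (mu (ssubc 0 0 (cnrec (ren idn S r) (ren idn S s) hole) c))
  | st_lam t t' : step t t' -> step (lam t) (lam t')
  | st_appl t t' s : step t t' -> step (app t s) (app t' s)
  | st_appr t s s' : step s s' -> step (app t s) (app t s')
  | st_mu c c' : stepc c c' -> step (mu c) (mu c')
  | st_succ t t' : step t t' -> step (succ t) (succ t')
  | st_nrec1 r r' s t : step r r' -> step (nrec r s t) (nrec r' s t)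
  | st_nrec2 r s s' t : step s s' -> step (nrec r s t) (nrec r s' t)
  | st_nrec3 r s t t' : step t t' -> step (nrec r s t) (nrec r s t')
with stepc : cmd -> cmd -> Prop :=
  | st_mui a c : stepc (named a (mu c)) (renc idn Nat.pred (ssubc 0 (S a) hole c))
  | st_named a t t' : step t t' -> stepc (named a t) (named a t').

Definition conv : tm -> tm -> Prop := clos_refl_sym_trans tm step.

Inductive ttm : Type :=
  | tvar (x : nat)
  | tlam (t : ttm)
  | tapp (t s : ttm)
  | tzero
  | tsucc (t : ttm)
  | tnrec (r s t : ttm).

Fixpoint tren (f : nat -> nat) (t : ttm) : ttm :=
  match t with
  | tvar x => tvar (f x)
  | tlam t => tlam (tren (upr f) t)
  | tapp t s => tapp (tren f t) (tren f s)
  | tzero => tzero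
  | tsucc t => tsucc (tren f t)
  | tnrec r s t => tnrec (tren f r) (tren f s) (tren f t)
  end.

Definition tups (sigma : nat -> ttm) : nat -> ttm :=
  scons (tvar 0) (fun n => tren S (sigma n)).

Fixpoint tsubst (sigma : nat -> ttm) (t : ttm) : ttm :=
  match t with
  | tvar x => sigma x
  | tlam t => tlam (tsubst (tups sigma) t)
  | tapp t s => tapp (tsubst sigma t) (tsubst sigma s)
  | tzero => tzero
  | tsucc t => tsucc (tsubst sigma t)
  | tnrec r s t => tnrec (tsubst sigma r) (tsubst sigma s) (tsubst sigma t)
  end.

Inductive tstep : ttm -> ttm -> Prop :=
  | ts_beta t r : tstep (tapp (tlam t) r) (tsubst (scons r tvar) t)
  | ts_zero r s : tstep (tnrec r s tzero) r
  | ts_S r s t : tstep (tnrec r s (tsucc t)) (tapp (tapp s t) (tnrec r s t))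
  | ts_lam t t' : tstep t t' -> tstep (tlam t) (tlam t')
  | ts_appl t t' s : tstep t t' -> tstep (tapp t s) (tapp t' s)
  | ts_appr t s s' : tstep s s' -> tstep (tapp t s) (tapp t s')
  | ts_succ t t' : tstep t t' -> tstep (tsucc t) (tsucc t')
  | ts_nrec1 r r' s t : tstep r r' -> tstep (tnrec r s t) (tnrec r' s t)
  | ts_nrec2 r s s' t : tstep s s' -> tstep (tnrec r s t) (tnrec r s' t)
  | ts_nrec3 r s t t' : tstep t t' -> tstep (tnrec r s t) (tnrec r s t').

Definition tconv : ttm -> ttm -> Prop := clos_refl_sym_trans ttm tstep.

(* t o r := \k. t (\l. l r k) *)
Definition circ (t r : ttm) : ttm :=
  tlam (tapp (tren S t)
             (tlam (tapp (tapp (tvar 0) (tren (fun n => S (S n)) r)) (tvar 1)))).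

(* overline t := \k. k t *)
Definition bar (t : ttm) : ttm := tlam (tapp (tvar 0) (tren S t)).

(* cps rho kappa t : translation of t, where lambda-variable x is sent to the
   T-variable rho x and mu-variable a to the T-variable kappa a (= k_a). *)
Fixpoint cps (rho kappa : nat -> nat) (t : tm) : ttm :=
  match t with
  | var x => tlam (tapp (tvar (S (rho x))) (tvar 0))
  | lam t => tlam (tapp (tvar 0)
              (tlam (cps (scons 0 (fun n => S (S (rho n))))
                         (fun n => S (S (kappa n))) t)))
  | app t r => circ (cps rho kappa t) (cps rho kappa r)
  | mu c => tlam (cpsc (fun n => S (rho n)) (scons 0 (fun n => S (kappa n))) c)
  | zero => bar tzero
  | succ t => tlam (tapp (cps (fun n => S (rho n)) (fun n => S (kappa n)) t)
                         (tlam (tapp (tvar 1) (tsucc (tvar 0)))))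
  | nrec r s t =>
      tlam (tapp (cps (fun n => S (rho n)) (fun n => S (kappa n)) t)
             (tlam (tapp (tnrec (cps (fun n => S (S (rho n))) (fun n => S (S (kappa n))) r)
                                (tlam (tlam
                                   (circ (circ (cps (fun n => S (S (S (S (rho n)))))
                                                    (fun n => S (S (S (S (kappa n))))) s)
                                               (bar (tvar 1)))
                                         (tvar 0))))
                                (tvar 0))
                         (tvar 1))))
  end
with cpsc (rho kappa : nat -> nat) (c : cmd) : ttm :=
  match c with named a t => tapp (cps rho kappa t) (tvar (kappa a)) end.

(* t^* : lambda-variable x is named 2x, and k_a is named 2a+1 in T
   (so all the k_a are distinct and distinct from the lambda-variables). *)
Definition star (t : tm) : ttm := cps (fun x => 2 * x) (fun a => S (2 * a)) t.

(* Main.v *)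
Require Import Defs.
From Stdlib Require Import Relations Arith FunctionalExtensionality Lia.

Arguments circ : simpl never.
Arguments bar : simpl never.

Lemma tren_tren f g t : tren f (tren g t) = tren (fun n => f (g n)) t.
Proof.
  revert f g; induction t; intros; simpl; f_equal; auto.
  rewrite IHt. f_equal. extensionality n; destruct n; reflexivity.
Qed.

Lemma tsubst_tren s f t : tsubst s (tren f t) = tsubst (fun n => s (f n)) t.
Proof.
  revert s f; induction t; intros; simpl; f_equal; auto.
  rewrite IHt. f_equal. extensionality n; destruct n; reflexivity.
Qed.

Lemma tren_tsubst f s t : tren f (tsubst s t) = tsubst (fun n => tren f (s n)) t.
Proof.
  revert s f; induction t; intros; simpl; f_equal; auto.
  rewrite IHt. f_equal. extensionality n; destruct n; simpl; try reflexivity.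
  unfold tups; simpl. rewrite !tren_tren. reflexivity.
Qed.

Lemma tsubst_tsubst s r t : tsubst s (tsubst r t) = tsubst (fun n => tsubst s (r n)) t.
Proof.
  revert s r; induction t; intros; simpl; f_equal; auto.
  rewrite IHt. f_equal. extensionality n; destruct n; simpl; try reflexivity.
  rewrite tsubst_tren, tren_tsubst. reflexivity.
Qed.

Lemma tsubst_tvar t : tsubst tvar t = t.
Proof.
  induction t; simpl; f_equal; auto.
  replace (tups tvar) with tvar; auto.
  extensionality n; destruct n; reflexivity.
Qed.

Lemma tren_as f t : tren f t = tsubst (fun n => tvar (f n)) t.
Proof.
  revert f; induction t; intros; simpl; f_equal; auto.
  rewrite IHt. f_equal. extensionality n; destruct n; reflexivity.
Qed.

Lemma tstep_tsubst t t' : tstep t t' -> forall s, tstep (tsubst s t) (tsubst s t').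
Proof.
  induction 1; intros; simpl; try (constructor; auto; fail).
  - replace (tsubst s (tsubst (scons r tvar) t)) with
      (tsubst (scons (tsubst s r) tvar) (tsubst (tups s) t)).
    constructor.
    rewrite !tsubst_tsubst. f_equal. extensionality n; destruct n; simpl; auto.
    rewrite tsubst_tren. simpl. apply tsubst_tvar.
Qed.

Lemma tconv_tsubst t t' : tconv t t' -> forall s, tconv (tsubst s t) (tsubst s t').
Proof.
  unfold tconv; induction 1; intros.
  - apply rst_step. apply tstep_tsubst. assumption.
  - apply rst_refl.
  - apply rst_sym; auto.
  - eapply rst_trans; eauto.
Qed.

Lemma tconv_tren t t' f : tconv t t' -> tconv (tren f t) (tren f t').
Proof. intros; rewrite !tren_as; apply tconv_tsubst; auto. Qed.

Ltac cong_tac := unfold tconv; induction 1; [apply rst_step; constructor; auto | apply rst_refl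
  | apply rst_sym; auto | eapply rst_trans; eauto].

Lemma c_lam t t' : tconv t t' -> tconv (tlam t) (tlam t').
Proof. cong_tac. Qed.
Lemma c_appl t t' s : tconv t t' -> tconv (tapp t s) (tapp t' s).
Proof. cong_tac. Qed.
Lemma c_appr t s s' : tconv s s' -> tconv (tapp t s) (tapp t s').
Proof. cong_tac. Qed.
Lemma c_succ t t' : tconv t t' -> tconv (tsucc t) (tsucc t').
Proof. cong_tac. Qed.
Lemma c_nrec1 r r' s t : tconv r r' -> tconv (tnrec r s t) (tnrec r' s t).
Proof. cong_tac. Qed.
Lemma c_nrec2 r s s' t : tconv s s' -> tconv (tnrec r s t) (tnrec r s' t).
Proof. cong_tac. Qed.
Lemma c_nrec3 r s t t' : tconv t t' -> tconv (tnrec r s t) (tnrec r s t').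
Proof. cong_tac. Qed.

Lemma c_app t t' s s' : tconv t t' -> tconv s s' -> tconv (tapp t s) (tapp t' s').
Proof. intros; eapply rst_trans; [apply c_appl|apply c_appr]; eauto. Qed.
Lemma c_nrec r r' s s' t t' : tconv r r' -> tconv s s' -> tconv t t' ->
  tconv (tnrec r s t) (tnrec r' s' t').
Proof. intros; eapply rst_trans; [apply c_nrec1; eauto|].
  eapply rst_trans; [apply c_nrec2; eauto| apply c_nrec3; eauto]. Qed.

Lemma circ_tsubst s a b : tsubst s (circ a b) = circ (tsubst s a) (tsubst s b).
Proof.
  unfold circ; simpl. f_equal. f_equal.
  - rewrite tsubst_tren, tren_tsubst; reflexivity.
  - f_equal; f_equal; f_equal. rewrite tsubst_tren, tren_tsubst. f_equal.
    extensionality n; simpl. rewrite tren_tren; reflexivity.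
Qed.

Lemma bar_tsubst s a : tsubst s (bar a) = bar (tsubst s a).
Proof. unfold bar; simpl. rewrite tsubst_tren, tren_tsubst; reflexivity. Qed.

Lemma circ_tren f a b : tren f (circ a b) = circ (tren f a) (tren f b).
Proof. rewrite !tren_as; apply circ_tsubst. Qed.

Lemma c_circ a a' b b' : tconv a a' -> tconv b b' -> tconv (circ a b) (circ a' b').
Proof. intros; unfold circ. apply c_lam, c_app. apply tconv_tren; auto.
  apply c_lam, c_appl, c_appr, tconv_tren; auto. Qed.

Lemma c_bar a a' : tconv a a' -> tconv (bar a) (bar a').
Proof. intros; unfold bar. apply c_lam, c_appr, tconv_tren; auto. Qed.

Lemma tc_step t t' : tstep t t' -> tconv t t'.
Proof. apply rst_step. Qed.
Lemma tc_trans a b c : tconv a b -> tconv b c -> tconv a c.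
Proof. apply rst_trans. Qed.
Lemma tc_sym a b : tconv a b -> tconv b a.
Proof. apply rst_sym. Qed.
Lemma tc_refl a : tconv a a.
Proof. apply rst_refl. Qed.
Lemma tc_eq a b : a = b -> tconv a b.
Proof. intros ->; apply rst_refl. Qed.

Lemma tc_beta t r u : tsubst (scons r tvar) t = u -> tconv (tapp (tlam t) r) u.
Proof. intros <-; apply rst_step; constructor. Qed.

Lemma eta_lam B : tconv (tlam (tapp (tren S (tlam B)) (tvar 0))) (tlam B).
Proof.
  apply c_lam. simpl. apply tc_beta. rewrite tsubst_tren.
  rewrite <- (tsubst_tvar B) at 2. f_equal. extensionality n; destruct n; reflexivity.
Qed.

Arguments circ : simpl never.
Arguments bar : simpl never.

Scheme tm_ind2 := Induction for tm Sort Prop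
  with cmd_ind2 := Induction for cmd Sort Prop.
Combined Scheme tm_cmd_ind from tm_ind2, cmd_ind2.

Ltac vcond := let x := fresh "x" in intro x; destruct x; simpl;
  repeat match goal with H : forall x, _ = _ |- _ => rewrite H end; reflexivity.

Lemma cps_vsub_all :
  (forall t rho kappa s f g, (forall x, s (rho x) = tvar (f x)) ->
     (forall a, s (kappa a) = tvar (g a)) -> tsubst s (cps rho kappa t) = cps f g t) /\
  (forall c rho kappa s f g, (forall x, s (rho x) = tvar (f x)) ->
     (forall a, s (kappa a) = tvar (g a)) -> tsubst s (cpsc rho kappa c) = cpsc f g c).
Proof.
  apply tm_cmd_ind; intros; cbn.
  - rewrite H; reflexivity.
  - erewrite H; [reflexivity| vcond | vcond].
  - rewrite circ_tsubst; erewrite H, H0; eauto.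
  - erewrite H; [reflexivity| vcond | vcond].
  - rewrite bar_tsubst; reflexivity.
  - erewrite H; [reflexivity| vcond | vcond].
  - rewrite circ_tsubst, circ_tsubst, bar_tsubst.
    erewrite H, H0, H1; [reflexivity| vcond .. ].
  - rewrite H1. erewrite H; eauto.
Qed.

Lemma cps_vsub t rho kappa s f g : (forall x, s (rho x) = tvar (f x)) ->
     (forall a, s (kappa a) = tvar (g a)) -> tsubst s (cps rho kappa t) = cps f g t.
Proof. apply cps_vsub_all. Qed.
Lemma cpsc_vsub c rho kappa s f g : (forall x, s (rho x) = tvar (f x)) ->
     (forall a, s (kappa a) = tvar (g a)) -> tsubst s (cpsc rho kappa c) = cpsc f g c.
Proof. apply cps_vsub_all. Qed.

Lemma cps_tren h t rho kappa :
  tren h (cps rho kappa t) = cps (fun n => h (rho n)) (fun n => h (kappa n)) t.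
Proof. rewrite tren_as. apply cps_vsub; reflexivity. Qed.
Lemma cpsc_tren h c rho kappa :
  tren h (cpsc rho kappa c) = cpsc (fun n => h (rho n)) (fun n => h (kappa n)) c.
Proof. rewrite tren_as. apply cpsc_vsub; reflexivity. Qed.

Lemma cps_ren_all :
  (forall t rho kappa f g, cps rho kappa (ren f g t) = cps (fun n => rho (f n)) (fun n => kappa (g n)) t) /\
  (forall c rho kappa f g, cpsc rho kappa (renc f g c) = cpsc (fun n => rho (f n)) (fun n => kappa (g n)) c).
Proof.
  apply tm_cmd_ind; intros; cbn; try rewrite H; try rewrite H0; try rewrite H1; try reflexivity.
  - f_equal; f_equal; f_equal; f_equal; extensionality n; destruct n; reflexivity.
  - f_equal; f_equal; extensionality n; destruct n; reflexivity.
Qed.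

Lemma cps_ren t rho kappa f g : cps rho kappa (ren f g t) = cps (fun n => rho (f n)) (fun n => kappa (g n)) t.
Proof. apply cps_ren_all. Qed.
Lemma cpsc_ren c rho kappa f g : cpsc rho kappa (renc f g c) = cpsc (fun n => rho (f n)) (fun n => kappa (g n)) c.
Proof. apply cps_ren_all. Qed.

Lemma cps_is_lam t rho kappa : exists B, cps rho kappa t = tlam B.
Proof. destruct t; cbn; eexists; reflexivity. Qed.

Lemma cps_mocc_all :
  (forall t rho kappa kappa', (forall n, mocc n t = true -> kappa n = kappa' n) ->
     cps rho kappa t = cps rho kappa' t) /\
  (forall c rho kappa kappa', (forall n, mocc_c n c = true -> kappa n = kappa' n) ->
     cpsc rho kappa c = cpsc rho kappa' c).
Proof.
  apply tm_cmd_ind; intros; cbn in *; try reflexivity.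
  - f_equal; f_equal; f_equal; apply H; intros; f_equal; auto.
  - rewrite (H rho kappa kappa'), (H0 rho kappa kappa'); auto;
      intros n Hn; apply H1; rewrite Hn; auto using Bool.orb_true_r.
  - f_equal; apply H; intros [|n] Hn; cbn; auto.
  - f_equal; f_equal; apply H; intros; f_equal; auto.
  - rewrite (H (fun n => S (S (rho n))) (fun n => S (S (kappa n))) (fun n => S (S (kappa' n)))),
      (H0 (fun n => S (S (S (S (rho n))))) (fun n => S (S (S (S (kappa n))))) (fun n => S (S (S (S (kappa' n)))))),
      (H1 (fun n => S (rho n)) (fun n => S (kappa n)) (fun n => S (kappa' n))); auto;
      (intros n Hn; rewrite (H2 n); [reflexivity | rewrite Hn; rewrite ?Bool.orb_true_r; reflexivity]).
  - f_equal. apply H; intros n Hn; apply H0; rewrite Hn; apply Bool.orb_true_r.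
    f_equal; apply H0; rewrite Nat.eqb_refl; reflexivity.
Qed.

Arguments circ : simpl never.
Arguments bar : simpl never.

Definition Fapp (b : ttm) : ttm :=
  tlam (tapp (tapp (tvar 0) (tren (fun n => S (S n)) b)) (tvar 1)).
Definition Fsucc : ttm := tlam (tapp (tvar 1) (tsucc (tvar 0))).
Definition Fnrec rho kappa r s : ttm :=
  tlam (tapp (tnrec (cps (fun n => S (S (rho n))) (fun n => S (S (kappa n))) r)
                                (tlam (tlam
                                   (circ (circ (cps (fun n => S (S (S (S (rho n)))))
                                                    (fun n => S (S (S (S (kappa n))))) s)
                                               (bar (tvar 1)))
                                         (tvar 0))))
                                (tvar 0))
                         (tvar 1)).
Arguments Fapp : simpl never.
Arguments Fsucc : simpl never.
Arguments Fnrec : simpl never.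

Lemma cps_app rho kappa t r : cps rho kappa (app t r) = circ (cps rho kappa t) (cps rho kappa r).
Proof. reflexivity. Qed.
Lemma circ_eq a b : circ a b = tlam (tapp (tren S a) (Fapp b)).
Proof. reflexivity. Qed.
Lemma cps_succ rho kappa t : cps rho kappa (succ t) =
  tlam (tapp (cps (fun n => S (rho n)) (fun n => S (kappa n)) t) Fsucc).
Proof. reflexivity. Qed.
Lemma cps_nrec rho kappa r s t : cps rho kappa (nrec r s t) =
  tlam (tapp (cps (fun n => S (rho n)) (fun n => S (kappa n)) t) (Fnrec rho kappa r s)).
Proof. reflexivity. Qed.

Fixpoint Tc rho kappa (E : ectx) (K : ttm) : ttm :=
  match E with
  | hole => K
  | capp E t => Tc rho kappa E (tsubst (scons K tvar) (Fapp (cps rho kappa t)))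
  | csucc E => Tc rho kappa E (tsubst (scons K tvar) Fsucc)
  | cnrec r s E => Tc rho kappa E (tsubst (scons K tvar) (Fnrec rho kappa r s))
  end.

Lemma Fapp_tsubst s b : tsubst (tups s) (Fapp b) = Fapp (tsubst s b).
Proof.
  unfold Fapp; cbn. f_equal; f_equal; f_equal.
  rewrite tsubst_tren, tren_tsubst. f_equal.
  extensionality n; cbn. rewrite tren_tren; reflexivity.
Qed.

Lemma Fsucc_tsubst s : tsubst (tups s) Fsucc = Fsucc.
Proof. reflexivity. Qed.

Lemma Fnrec_vsub s rho kappa f g r t : (forall x, s (rho x) = tvar (f x)) ->
     (forall a, s (kappa a) = tvar (g a)) ->
     tsubst (tups s) (Fnrec rho kappa r t) = Fnrec f g r t.
Proof.
  intros H1 H2. unfold Fnrec. cbn. rewrite !circ_tsubst, bar_tsubst.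
  rewrite (cps_vsub r _ _ _ (fun n => S (S (f n))) (fun n => S (S (g n)))) by vcond.
  rewrite (cps_vsub t _ _ _ (fun n => S (S (S (S (f n))))) (fun n => S (S (S (S (g n)))))) by vcond.
  reflexivity.
Qed.

Lemma subst_beta_comm s K F :
  tsubst s (tsubst (scons K tvar) F) = tsubst (scons (tsubst s K) tvar) (tsubst (tups s) F).
Proof.
  rewrite !tsubst_tsubst. f_equal. extensionality n; destruct n; cbn; auto.
  rewrite tsubst_tren. cbn. symmetry; apply tsubst_tvar.
Qed.

Lemma Tc_vsub E : forall sg rho kappa f g K, (forall x, sg (rho x) = tvar (f x)) ->
     (forall a, sg (kappa a) = tvar (g a)) ->
     tsubst sg (Tc rho kappa E K) = Tc f g E (tsubst sg K).
Proof.
  induction E; intros; cbn; auto; rewrite (IHE sg rho kappa f g); auto; f_equal;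
    rewrite subst_beta_comm; f_equal.
  - rewrite Fapp_tsubst. f_equal. apply cps_vsub; auto.
  - apply Fnrec_vsub; auto.
Qed.

Lemma Tc_tren h E rho kappa K :
  tren h (Tc rho kappa E K) = Tc (fun n => h (rho n)) (fun n => h (kappa n)) E (tren h K).
Proof. rewrite !tren_as. apply Tc_vsub; reflexivity. Qed.

Lemma Tc_renE E : forall rho kappa f g K,
  Tc rho kappa (renE f g E) K = Tc (fun n => rho (f n)) (fun n => kappa (g n)) E K.
Proof.
  induction E; intros; cbn; auto; rewrite IHE; f_equal.
  - rewrite cps_ren; reflexivity.
  - unfold Fnrec. rewrite !cps_ren. reflexivity.
Qed.

Lemma tsubst_beta_tren K A : tsubst (scons K tvar) (tren S A) = A.
Proof. rewrite tsubst_tren. apply tsubst_tvar. Qed.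

Lemma fill_lemma E : forall rho kappa u K,
  tconv (tapp (cps rho kappa (fill E u)) K) (tapp (cps rho kappa u) (Tc rho kappa E K)).
Proof.
  induction E; intros; cbn [fill Tc].
  - apply tc_refl.
  - eapply tc_trans; [|apply IHE]. rewrite cps_app, circ_eq.
    apply tc_beta. cbn. rewrite tsubst_beta_tren. reflexivity.
  - eapply tc_trans; [|apply IHE]. rewrite cps_succ.
    apply tc_beta. cbn. f_equal. apply cps_vsub; reflexivity.
  - eapply tc_trans; [|apply IHE]. rewrite cps_nrec.
    apply tc_beta. cbn. f_equal. apply cps_vsub; reflexivity.
Qed.

Arguments circ : simpl never.
Arguments bar : simpl never.
Arguments Fapp : simpl never.
Arguments Fsucc : simpl never.
Arguments Fnrec : simpl never.

Lemma mocc_ssub_all :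
  (forall t a b, b <> a -> mocc a (ssub a b hole t) = false) /\
  (forall c a b, b <> a -> mocc_c a (ssubc a b hole c) = false).
Proof.
  apply tm_cmd_ind; intros; cbn; auto.
  - rewrite H, H0; auto.
  - rewrite H, H0, H1; auto.
  - destruct (Nat.eqb a a0) eqn:Eq; cbn.
    + rewrite H; auto. apply Nat.eqb_neq in H0. rewrite H0. reflexivity.
    + rewrite Eq, H; auto.
Qed.

Definition SC (sg : nat -> ttm) rho kappa a b E :=
  sg (kappa a) = Tc rho kappa E (tvar (kappa b)) /\
  (forall c, c <> a -> sg (kappa c) = tvar (kappa c)) /\
  (forall x, sg (rho x) = tvar (rho x)).

Lemma SC_up sg rho kappa a b E : SC sg rho kappa a b E ->
  SC (tups sg) (fun n => S (rho n)) (fun n => S (kappa n)) a b E.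
Proof.
  intros [H1 [H2 H3]]; split; [|split]; intros; cbn.
  - rewrite H1, Tc_tren. reflexivity.
  - rewrite H2; auto.
  - rewrite H3; auto.
Qed.

Lemma cps_ssub_all :
  (forall t a b E rho kappa sg, SC sg rho kappa a b E ->
     tconv (cps rho kappa (ssub a b E t)) (tsubst sg (cps rho kappa t))) /\
  (forall c a b E rho kappa sg, SC sg rho kappa a b E ->
     tconv (cpsc rho kappa (ssubc a b E c)) (tsubst sg (cpsc rho kappa c))).
Proof.
  apply tm_cmd_ind; intros.
  - destruct H as [_ [_ H3]]. cbn. rewrite H3. apply tc_refl.
  - cbn. apply c_lam, c_appr, c_lam. apply H.
    pose proof (SC_up _ _ _ _ _ _ (SC_up _ _ _ _ _ _ H0)) as [H1 [H2 H3]].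
    split; [|split].
    + cbn in *. rewrite H1. rewrite Tc_renE. reflexivity.
    + intros; cbn in *. apply H2; auto.
    + intros [|x]; cbn in *; auto.
  - cbn [ssub]. rewrite !cps_app, circ_tsubst. apply c_circ; auto.
  - cbn. apply c_lam. apply H.
    pose proof (SC_up _ _ _ _ _ _ H0) as [H1 [H2 H3]].
    split; [|split].
    + cbn in *. rewrite H1. rewrite Tc_renE. reflexivity.
    + intros [|c'] Hc; cbn in *; auto.
    + intros x; cbn in *; auto.
  - apply tc_refl.
  - cbn [ssub]. rewrite !cps_succ. cbn [tsubst]. rewrite Fsucc_tsubst.
    apply c_lam, c_appl. apply H. apply SC_up; auto.
  - cbn [ssub]. rewrite !cps_nrec. cbn [tsubst]. apply c_lam, c_app.
    + apply H1. apply SC_up; auto.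
    + unfold Fnrec. cbn. rewrite !circ_tsubst, bar_tsubst.
      apply c_lam, c_appl, c_nrec; [| |apply tc_refl].
      * apply H. do 2 apply SC_up. auto.
      * apply c_lam, c_lam, c_circ; [|apply tc_refl]. apply c_circ; [|apply tc_refl].
        apply H0. do 4 apply SC_up. auto.
  - cbn [ssubc]. destruct (Nat.eqb a a0) eqn:Eq.
    + apply Nat.eqb_eq in Eq; subst. destruct H0 as [H1 H2]. cbn. rewrite H1.
      eapply tc_trans; [apply fill_lemma|]. apply c_appl. apply H. split; auto.
    + apply Nat.eqb_neq in Eq. cbn. destruct H0 as [H1 [H2 H3]]. rewrite H2; auto.
      apply c_appl, H. split; auto.
Qed.

Arguments circ : simpl never.
Arguments bar : simpl never.
Arguments Fapp : simpl never.
Arguments Fsucc : simpl never.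
Arguments Fnrec : simpl never.

Definition etaT (M : ttm) := tlam (tapp (tren S M) (tvar 0)).

Definition SB (sg : nat -> ttm) rho kappa rho' kappa' (sigma : nat -> tm) :=
  (forall a, sg (kappa a) = tvar (kappa' a)) /\
  (forall x, tconv (etaT (sg (rho x))) (cps rho' kappa' (sigma x))).

Lemma SB_up sg rho kappa rho' kappa' sigma : SB sg rho kappa rho' kappa' sigma ->
  SB (tups sg) (fun n => S (rho n)) (fun n => S (kappa n))
     (fun n => S (rho' n)) (fun n => S (kappa' n)) sigma.
Proof.
  intros [H1 H2]; split; intros; cbn.
  - rewrite H1; reflexivity.
  - rewrite <- cps_tren. eapply tc_trans; [|apply tconv_tren, H2].
    unfold etaT. cbn. rewrite !tren_tren. apply tc_refl.
Qed.

Lemma cps_subst_all :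
  (forall t rho kappa rho' kappa' sg sigma, SB sg rho kappa rho' kappa' sigma ->
     tconv (tsubst sg (cps rho kappa t)) (cps rho' kappa' (subst sigma t))) /\
  (forall c rho kappa rho' kappa' sg sigma, SB sg rho kappa rho' kappa' sigma ->
     tconv (tsubst sg (cpsc rho kappa c)) (cpsc rho' kappa' (substc sigma c))).
Proof.
  apply tm_cmd_ind; intros.
  - destruct H as [_ H]. apply H.
  - cbn. apply c_lam, c_appr, c_lam. apply H.
    pose proof (SB_up _ _ _ _ _ _ (SB_up _ _ _ _ _ _ H0)) as [H1 H2].
    split.
    + intros; cbn in *. apply H1.
    + intros [|x]; cbn in *.
      * apply tc_refl.
      * rewrite cps_ren. apply H2.
  - cbn [subst]. rewrite !cps_app, circ_tsubst. apply c_circ; eauto.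
  - cbn. apply c_lam. apply H.
    pose proof (SB_up _ _ _ _ _ _ H0) as [H1 H2].
    split.
    + intros [|a]; cbn in *; auto.
    + intros x; cbn in *. unfold upm. rewrite cps_ren. apply H2.
  - apply tc_refl.
  - cbn [subst]. rewrite !cps_succ. cbn [tsubst]. rewrite Fsucc_tsubst.
    apply c_lam, c_appl. apply H. apply SB_up; auto.
  - cbn [subst]. rewrite !cps_nrec. cbn [tsubst]. apply c_lam, c_app.
    + apply H1. apply SB_up; auto.
    + unfold Fnrec. cbn. rewrite !circ_tsubst, bar_tsubst.
      apply c_lam, c_appl, c_nrec; [| |apply tc_refl].
      * apply H. do 2 apply SB_up. auto.
      * apply c_lam, c_lam, c_circ; [|apply tc_refl]. apply c_circ; [|apply tc_refl].
        apply H0. do 4 apply SB_up. auto.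
  - cbn. destruct H0 as [H1 H2]. rewrite H1. apply c_appl, H. split; auto.
Qed.

Arguments circ : simpl never.
Arguments bar : simpl never.
Arguments Fapp : simpl never.
Arguments Fsucc : simpl never.
Arguments Fnrec : simpl never.

Lemma eta_conv M B : tconv M (tlam B) -> tconv (etaT M) M.
Proof.
  intros H. eapply tc_trans; [|apply tc_sym, H].
  eapply tc_trans; [|apply eta_lam]. unfold etaT. apply c_lam, c_appl, tconv_tren, H.
Qed.

Lemma etaT_cps rho kappa u : tconv (etaT (cps rho kappa u)) (cps rho kappa u).
Proof. destruct (cps_is_lam u rho kappa) as [B HB]. apply (eta_conv _ B). rewrite HB; apply tc_refl. Qed.

Lemma eta_cps rho kappa u :
  tconv (tlam (tapp (cps (fun n => S (rho n)) (fun n => S (kappa n)) u) (tvar 0))) (cps rho kappa u).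
Proof. rewrite <- cps_tren. apply etaT_cps. Qed.

Fixpoint tnum n := match n with 0 => tzero | S m => tsucc (tnum m) end.

Lemma tsubst_tnum s n : tsubst s (tnum n) = tnum n.
Proof. induction n; cbn; congruence. Qed.
Lemma tren_tnum f n : tren f (tnum n) = tnum n.
Proof. rewrite tren_as; apply tsubst_tnum. Qed.

Lemma num_app n : forall rho kappa K, tconv (tapp (cps rho kappa (num n)) K) (tapp K (tnum n)).
Proof.
  induction n; intros.
  - apply tc_beta. reflexivity.
  - eapply tc_trans. apply (fill_lemma (csucc hole) rho kappa (num n) K).
    cbn [Tc]. eapply tc_trans. apply IHn. unfold Fsucc. apply tc_beta. cbn.
    rewrite tsubst_beta_tren. reflexivity.
Qed.

Lemma num_bar n rho kappa : tconv (cps rho kappa (num n)) (bar (tnum n)).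
Proof.
  eapply tc_trans; [apply tc_sym, etaT_cps|]. unfold etaT, bar. apply c_lam.
  rewrite cps_tren, tren_tnum. apply num_app.
Qed.
Arguments circ : simpl never.
Arguments bar : simpl never.
Arguments Fapp : simpl never.
Arguments Fsucc : simpl never.
Arguments Fnrec : simpl never.

Lemma case_beta rho kappa t r :
  tconv (cps rho kappa (app (lam t) r)) (cps rho kappa (subst1 t r)).
Proof.
  eapply tc_trans; [|apply eta_cps]. rewrite cps_app, circ_eq. apply c_lam.
  cbn. eapply tc_trans. apply tc_beta. reflexivity.
  cbn. rewrite cps_tren.
  rewrite (cps_vsub t _ _ _ (scons 0 (fun n => S (S (rho n)))) (fun n => S (S (kappa n)))) by vcond.
  unfold Fapp. eapply tc_trans. apply tc_beta. reflexivity.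
  cbn. rewrite cps_tren.
  rewrite (cps_vsub r _ _ _ (fun n => S (rho n)) (fun n => S (kappa n))) by vcond.
  eapply tc_trans. apply c_appl. apply tc_beta. reflexivity.
  apply c_appl. unfold subst1.
  apply (proj1 cps_subst_all). split.
  - intros a; reflexivity.
  - intros [|x]; cbn.
    + apply etaT_cps.
    + apply tc_refl.
Qed.

Lemma mu_gen c rho kappa E K :
  Tc (fun n => S (rho n)) (scons 0 (fun n => S (kappa n))) E (tvar 0) = K ->
  tconv (tapp (tlam (cpsc (fun n => S (S (rho n))) (scons 0 (fun n => S (S (kappa n)))) c)) K)
        (cpsc (fun n => S (rho n)) (scons 0 (fun n => S (kappa n))) (ssubc 0 0 E c)).
Proof.
  intros HK. eapply tc_trans; [apply tc_beta; reflexivity|]. apply tc_sym.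
  eapply tc_trans; [apply (proj2 cps_ssub_all) with (sg := scons K (fun n => tvar (S n)))|].
  - split; [|split].
    + cbn. auto.
    + intros [|c'] Hc; cbn; [congruence|reflexivity].
    + reflexivity.
  - apply tc_eq.
    replace (cpsc (fun n => S (S (rho n))) (scons 0 (fun n => S (S (kappa n)))) c) with
      (tren (upr S) (cpsc (fun n => S (rho n)) (scons 0 (fun n => S (kappa n))) c)).
    + rewrite tsubst_tren. f_equal. extensionality n; destruct n; reflexivity.
    + rewrite cpsc_tren. f_equal. extensionality n; destruct n; reflexivity.
Qed.

Lemma case_muS rho kappa c :
  tconv (cps rho kappa (succ (mu c))) (cps rho kappa (mu (ssubc 0 0 (csucc hole) c))).
Proof.
  rewrite cps_succ. cbn [cps]. apply c_lam. apply mu_gen. reflexivity.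
Qed.

Lemma case_muR rho kappa c s :
  tconv (cps rho kappa (app (mu c) s))
        (cps rho kappa (mu (ssubc 0 0 (capp hole (ren idn S s)) c))).
Proof.
  rewrite cps_app, circ_eq. cbn [cps tren]. apply c_lam.
  replace (tren (upr S) (cpsc (fun n => S (rho n)) (scons 0 (fun n => S (kappa n))) c)) with
    (cpsc (fun n => S (S (rho n))) (scons 0 (fun n => S (S (kappa n)))) c).
  - apply mu_gen. cbn [Tc]. rewrite cps_ren. unfold Fapp. cbn.
    rewrite !cps_tren.
    rewrite (cps_vsub s _ _ _ (fun n => S (S (rho n))) (fun n => S (S (kappa n)))) by vcond.
    reflexivity.
  - rewrite cpsc_tren. f_equal. extensionality n; destruct n; reflexivity.
Qed.

Lemma bar_tren f a : tren f (bar a) = bar (tren f a).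
Proof. rewrite !tren_as; apply bar_tsubst. Qed.

Lemma Fnrec_down rho kappa r s :
  tsubst (scons (tvar 0) tvar) (Fnrec (fun n => S (rho n)) (fun n => S (kappa n)) r s) = Fnrec rho kappa r s.
Proof.
  unfold Fnrec; cbn. rewrite !circ_tsubst, bar_tsubst.
  rewrite (cps_vsub r _ _ _ (fun n => S (S (rho n))) (fun n => S (S (kappa n)))) by vcond.
  rewrite (cps_vsub s _ _ _ (fun n => S (S (S (S (rho n))))) (fun n => S (S (S (S (kappa n)))))) by vcond.
  reflexivity.
Qed.

Lemma Fnrec_ren rho kappa f g r s :
  Fnrec rho kappa (ren f g r) (ren f g s) = Fnrec (fun n => rho (f n)) (fun n => kappa (g n)) r s.
Proof. unfold Fnrec. rewrite !cps_ren. reflexivity. Qed.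

Lemma case_muN rho kappa r s c :
  tconv (cps rho kappa (nrec r s (mu c)))
        (cps rho kappa (mu (ssubc 0 0 (cnrec (ren idn S r) (ren idn S s) hole) c))).
Proof.
  rewrite cps_nrec. cbn [cps]. apply c_lam. apply mu_gen. cbn [Tc].
  rewrite Fnrec_ren. apply (Fnrec_down rho kappa r s).
Qed.

Lemma case_mueta rho kappa t : mocc 0 t = false ->
  tconv (cps rho kappa (mu (named 0 t))) (cps rho kappa (ren idn Nat.pred t)).
Proof.
  intros Hm. eapply tc_trans; [|apply eta_cps]. cbn [cps cpsc]. apply c_lam. apply tc_eq.
  rewrite cps_ren. f_equal. apply (proj1 cps_mocc_all).
  intros [|n] Hn; [congruence|reflexivity].
Qed.

Lemma case_zero rho kappa r s : tconv (cps rho kappa (nrec r s zero)) (cps rho kappa r).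
Proof.
  eapply tc_trans; [|apply eta_cps]. rewrite cps_nrec. apply c_lam. cbn [cps].
  unfold bar. eapply tc_trans. apply tc_beta. reflexivity. cbn.
  unfold Fnrec. eapply tc_trans. apply tc_beta. reflexivity. cbn.
  apply c_appl. eapply tc_trans. apply tc_step, ts_zero.
  apply tc_eq. apply cps_vsub; vcond.
Qed.

Definition Pn rho kappa r s n := tnrec (cps rho kappa r)
  (tlam (tlam (circ (circ (cps (fun n => S (S (rho n))) (fun n => S (S (kappa n))) s) (bar (tvar 1))) (tvar 0))))
  (tnum n).

Lemma Pn_lam rho kappa r s n : exists B, tconv (Pn rho kappa r s n) (tlam B).
Proof.
  unfold Pn. destruct n.
  - destruct (cps_is_lam r rho kappa) as [B HB]. exists B. rewrite <- HB.
    apply tc_step, ts_zero.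
  - eexists. eapply tc_trans. apply tc_step, ts_S.
    eapply tc_trans. apply c_appl, tc_beta. reflexivity.
    apply tc_beta. cbn [tsubst]. rewrite !circ_tsubst, circ_eq. reflexivity.
Qed.

Lemma Pn_conv rho kappa r s n : tconv (Pn rho kappa r s n) (cps rho kappa (nrec r s (num n))).
Proof.
  destruct (Pn_lam rho kappa r s n) as [B HB].
  eapply tc_trans; [apply tc_sym, (eta_conv _ B HB)|].
  rewrite cps_nrec. unfold etaT. apply c_lam. apply tc_sym.
  eapply tc_trans. apply num_app. unfold Fnrec. apply tc_beta. cbn [tsubst scons].
  rewrite !circ_tsubst, bar_tsubst.
  rewrite (cps_vsub r _ _ _ (fun n => S (rho n)) (fun n => S (kappa n))) by vcond.
  rewrite (cps_vsub s _ _ _ (fun n => S (S (S (rho n)))) (fun n => S (S (S (kappa n))))) by vcond.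
  unfold Pn. cbn [tren]. rewrite circ_tren, circ_tren, bar_tren, !cps_tren. rewrite ?tren_tnum, ?tsubst_tnum. cbn [tren upr scons].
  reflexivity.
Qed.

Lemma case_S rho kappa r s n :
  tconv (cps rho kappa (nrec r s (succ (num n))))
        (cps rho kappa (app (app s (num n)) (nrec r s (num n)))).
Proof.
  eapply tc_trans; [|apply etaT_cps]. unfold etaT.
  rewrite cps_nrec. apply c_lam.
  eapply tc_trans. apply (num_app (S n)).
  unfold Fnrec at 1. eapply tc_trans. apply tc_beta. reflexivity. cbn [tsubst scons].
  rewrite circ_tsubst, circ_tsubst, bar_tsubst.
  rewrite (cps_vsub r _ _ _ (fun n => S (rho n)) (fun n => S (kappa n))) by vcond.
  rewrite (cps_vsub s _ _ _ (fun n => S (S (S (rho n)))) (fun n => S (S (S (kappa n))))) by vcond.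
  cbn [tsubst tups scons tren].
  eapply tc_trans. apply c_appl, tc_step, ts_S.
  eapply tc_trans. apply c_appl, c_appl, tc_beta. reflexivity.
  eapply tc_trans. apply c_appl, tc_beta. reflexivity.
  rewrite !circ_tsubst, !bar_tsubst.
  rewrite (cps_vsub s _ _ _ (fun n => S (S (rho n))) (fun n => S (S (kappa n)))) by vcond.
  rewrite (cps_vsub s _ _ _ (fun n => S (rho n)) (fun n => S (kappa n))) by vcond.
  cbn [tsubst tups scons tren].
  fold (tnum n).
  rewrite !tren_tnum, !tsubst_tnum.
  rewrite !cps_app, !circ_tren, !cps_tren.
  apply c_appl. apply c_circ. apply c_circ. apply tc_refl.
  - apply tc_sym. apply num_bar.
  - apply (Pn_conv (fun n => S (rho n)) (fun n => S (kappa n)) r s n).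
Qed.


Lemma case_mui rho kappa a c :
  tconv (cpsc rho kappa (named a (mu c))) (cpsc rho kappa (renc idn Nat.pred (ssubc 0 (S a) hole c))).
Proof.
  cbn [cpsc cps]. eapply tc_trans. apply tc_beta. reflexivity.
  rewrite (cpsc_vsub c _ _ _ rho (scons (kappa a) kappa)) by vcond.
  rewrite cpsc_ren.
  rewrite ((proj2 cps_mocc_all) _ rho (fun n => kappa (Nat.pred n)) (scons (kappa a) kappa)).
  - apply tc_sym. eapply tc_trans. apply (proj2 cps_ssub_all) with (sg := tvar).
    + split; [|split]; reflexivity.
    + rewrite tsubst_tvar. apply tc_refl.
  - intros [|n] Hn; [|reflexivity].
    rewrite (proj2 mocc_ssub_all) in Hn; [discriminate|auto].
Qed.

Scheme step_ind2 := Induction for step Sort Prop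
  with stepc_ind2 := Induction for stepc Sort Prop.
Combined Scheme step_stepc_ind from step_ind2, stepc_ind2.

Lemma step_cps_all :
  (forall t t', step t t' -> forall rho kappa, tconv (cps rho kappa t) (cps rho kappa t')) /\
  (forall c c', stepc c c' -> forall rho kappa, tconv (cpsc rho kappa c) (cpsc rho kappa c')).
Proof.
  apply step_stepc_ind; intros.
  - apply case_beta.
  - apply case_muS.
  - apply case_muR.
  - apply case_mueta; auto.
  - apply case_zero.
  - apply case_S.
  - apply case_muN.
  - cbn. apply c_lam, c_appr, c_lam. auto.
  - rewrite !cps_app. apply c_circ; auto. apply tc_refl.
  - rewrite !cps_app. apply c_circ; auto. apply tc_refl.
  - cbn. apply c_lam. auto.
  - rewrite !cps_succ. apply c_lam, c_appl. auto.
  - rewrite !cps_nrec. apply c_lam, c_appr. unfold Fnrec.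
    apply c_lam, c_appl, c_nrec1. auto.
  - rewrite !cps_nrec. apply c_lam, c_appr. unfold Fnrec.
    apply c_lam, c_appl, c_nrec2, c_lam, c_lam, c_circ; [|apply tc_refl].
    apply c_circ; [auto|apply tc_refl].
  - rewrite !cps_nrec. apply c_lam, c_appl. auto.
  - apply case_mui.
  - cbn. apply c_appl. auto.
Qed.

Theorem mainTheorem6 (t1 t2 : tm) : conv t1 t2 -> tconv (star t1) (star t2).
Proof.
  unfold conv, star. induction 1.
  - apply (proj1 step_cps_all); auto.
  - apply tc_refl.
  - apply tc_sym; auto.
  - eapply tc_trans; eauto.
Qed.
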